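(* Let $t\in(0,\infty)\cap\mathbb Q$ be a reduced fraction. (1) If $0<t<1$, then each subword of $\omega_t$ lying between two consecutive occurrences of $z^{\pm1}$ is either of the form $y^{\pm1}$ or of the form $y^{\pm1}x^{\pm1}y^{\pm1}$. (2) If $1<t<\infty$, then each subword of $\omega_t$ lying between two consecutive occurrences of $x^{\pm1}$ is either of the form $y^{\pm1}$ or of the form $y^{\pm1}z^{\pm1}y^{\pm1}$.
   Context: Modified lattice: the planar graph with vertex set $\mathbb Z^2$ whose edges are the horizontal unit segments, the vertical unit segments, and the diagonal segments of slope $-1$ joining $(i,j+1)$ and $(i+1,j)$. Words $\omega_t$: for reduced $t=p/q\in(0,\infty)$, let $L_t$ be the segment from $(0,0)$ to $(q,p)$, oriented from $(0,0)$ to $(q,p)$. List the edges whose relative interior meets $L_t$, in the order of the intersection points along $L_t$. A horizontal (resp. diagonal, vertical) edge contributes $x$ (resp. $y$, $z$) if its midpoint is not on the right-hand side of $L_t$ (including lying on $L_t$), and $x^{-1}$ (resp. $y^{-1}$, $z^{-1}$) if its midpoint is on the right-hand side. $\omega_t$ is the concatenation of these letters. The notation $y^{\pm1}x^{\pm1}y^{\pm1}$ means a word of three letters with these generators and arbitrary exponents $\pm1$. *)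

(* Defs.v *)
From mathcomp Require Import all_boot all_order all_algebra.
Set Implicit Arguments. Unset Strict Implicit. Unset Printing Implicit Defensive.
Import Order.TTheory GRing.Theory Num.Theory.
Local Open Scope ring_scope.

(* Edge kinds of the modified lattice, identified with the generator they
   contribute: GX = horizontal edge (letter x), GY = diagonal edge of slope -1
   (letter y), GZ = vertical edge (letter z). *)
Inductive gen := GX | GY | GZ.

(* An edge is a kind together with an integer anchor (i,j):
   horizontal (GX,(i,j)) : segment (i,j)--(i+1,j)
   vertical   (GZ,(i,j)) : segment (i,j)--(i,j+1)
   diagonal   (GY,(i,j)) : segment (i,j+1)--(i+1,j).
   Each edge of the lattice has exactly one such representation. *)
Definition edge := (gen * (int * int))%type.

Definition cross (a b : int * int) : int := a.1 * b.2 - a.2 * b.1.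

(* starting endpoint [edge_a e] and direction [edge_d e]: the edge is
   { edge_a e + u * edge_d e | 0 <= u <= 1 } *)
Definition edge_a (e : edge) : int * int :=
  match e.1 with
  | GX | GZ => e.2
  | GY => (e.2.1, e.2.2 + 1)
  end.
Definition edge_d (e : edge) : int * int :=
  match e.1 with
  | GX => (1, 0)
  | GZ => (0, 1)
  | GY => (1, -1)
  end.

(* L_t goes from (0,0) to w = (q,p), i.e. is { s * w | 0 <= s <= 1 }. *)
Definition lvec (p q : nat) : int * int := (q%:Z, p%:Z).

(* Solving edge_a e + u * edge_d e = s * w (non-parallel case; the edge
   directions are never parallel to w when p, q > 0). *)
Definition par_u (p q : nat) (e : edge) : rat :=
  (cross (lvec p q) (edge_a e))%:~R / (cross (edge_d e) (lvec p q))%:~R.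
Definition par_s (p q : nat) (e : edge) : rat :=
  (cross (edge_a e) (edge_d e))%:~R / (cross (lvec p q) (edge_d e))%:~R.

Definition crosses (p q : nat) (e : edge) : bool :=
  (0 < par_u p q e < 1) && (0 <= par_s p q e <= 1).

(* Candidate edges: all edges with anchor in [-1,q] x [-1,p]; every edge
   meeting L_t (which lies in the box [0,q] x [0,p]) is among them. *)
Definition candidates (p q : nat) : seq edge :=
  let I := [seq (n%:Z - 1) | n <- iota 0 (q + 2)] in
  let J := [seq (n%:Z - 1) | n <- iota 0 (p + 2)] in
  flatten [seq [seq (k, ij) | ij <- [seq (i, j) | i <- I, j <- J]]
          | k <- [:: GX; GY; GZ]].

Definition crossed_edges (p q : nat) : seq edge :=
  sort (fun e f => par_s p q e <= par_s p q f) [seq e <- candidates p q | crosses p q e].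

(* A letter: generator with exponent; true = exponent +1, false = -1. *)
Definition letter := (gen * bool)%type.

(* The midpoint m of e is not on the right-hand side of L_t (oriented from
   (0,0) to w) iff cross(w, m) >= 0; we use 2m = 2 a + d. *)
Definition letter_of (p q : nat) (e : edge) : letter :=
  (e.1, 0 <= cross (lvec p q)
                   (2 * (edge_a e).1 + (edge_d e).1, 2 * (edge_a e).2 + (edge_d e).2)).

Definition omega (p q : nat) : seq letter := map (letter_of p q) (crossed_edges p q).

Definition is_gen (g : gen) (l : letter) : bool :=
  match g, l.1 with
  | GX, GX | GY, GY | GZ, GZ => true
  | _, _ => false
  end.

Definition between_prop (g a b : gen) (w : seq letter) : Prop :=
  forall i j : nat, (i < j < size w)%N ->
    is_gen g (nth (GX, true) w i) -> is_gen g (nth (GX, true) w j) ->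
    (forall k : nat, (i < k < j)%N -> ~~ is_gen g (nth (GX, true) w k)) ->
    let s := drop i.+1 (take j w) in
    map fst s = [:: a] \/ map fst s = [:: a; b; a].

(* Main.v *)
From HB Require Import structures.
Require Import Defs.
From mathcomp Require Import all_boot all_order all_algebra.
From mathcomp Require Import zify ring lra.
Import Order.TTheory GRing.Theory Num.Theory.
Local Open Scope ring_scope.

Definition gen_eqb (a b : gen) := match a, b with GX,GX|GY,GY|GZ,GZ => true | _,_ => false end.
Lemma gen_eqP : Equality.axiom gen_eqb. Proof. by case; case; constructor. Qed.
HB.instance Definition _ := hasDecEq.Build gen gen_eqP.

Lemma fracN (x y : int) : (x%:~R / y%:~R : rat) = (- x)%:~R / (- y)%:~R.
Proof. by rewrite !intrN invrN mulrNN. Qed.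

Lemma frac_gt0 (x y : int) : 0 < y -> (0 < (x%:~R / y%:~R : rat)) = (0 < x).
Proof. by move=> hy; rewrite ltr_pdivlMr ?ltr0z // mul0r ltr0z. Qed.
Lemma frac_ge0 (x y : int) : 0 < y -> (0 <= (x%:~R / y%:~R : rat)) = (0 <= x).
Proof. by move=> hy; rewrite ler_pdivlMr ?ltr0z // mul0r ler0z. Qed.
Lemma frac_lt1 (x y : int) : 0 < y -> ((x%:~R / y%:~R : rat) < 1) = (x < y).
Proof. by move=> hy; rewrite ltr_pdivrMr ?ltr0z // mul1r ltr_int. Qed.
Lemma frac_le1 (x y : int) : 0 < y -> ((x%:~R / y%:~R : rat) <= 1) = (x <= y).
Proof. by move=> hy; rewrite ler_pdivrMr ?ltr0z // mul1r ler_int. Qed.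

Section K.
Variables p q : nat.
Hypotheses (hp : (0 < p)%N) (hq : (0 < q)%N).


Lemma crossesZ a b : crosses p q (GZ, (a, b)) =
  [&& 0 < p%:Z * a - q%:Z * b, p%:Z * a - q%:Z * b < q%:Z, 0 <= a & a <= q%:Z].
Proof.
rewrite /crosses /par_u /par_s /cross /=.
rewrite !mul0r !mul1r !mulr1 !mulr0 !subr0 sub0r [_ / (- _)%:~R]fracN opprK opprB.
by rewrite !(frac_gt0, frac_lt1, frac_ge0, frac_le1) //; lia.
Qed.
Lemma par_sZ a b : par_s p q (GZ, (a, b)) = a%:~R / (q%:Z)%:~R.
Proof. by rewrite /par_s /cross /= !mulr1 !mulr0 !subr0. Qed.

Lemma crossesX a b : crosses p q (GX, (a, b)) =
  [&& 0 < q%:Z * b - p%:Z * a, q%:Z * b - p%:Z * a < p%:Z, 0 <= b & b <= p%:Z].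
Proof.
rewrite /crosses /par_u /par_s /cross /=.
rewrite !mul0r !mul1r !mulr1 !mulr0 !subr0 !sub0r [_ / (- _)%:~R]fracN !opprK.
by rewrite !(frac_gt0, frac_lt1, frac_ge0, frac_le1) //; lia.
Qed.
Lemma par_sX a b : par_s p q (GX, (a, b)) = b%:~R / (p%:Z)%:~R.
Proof. by rewrite /par_s /cross /= !mulr1 !mulr0 !sub0r fracN !opprK. Qed.

Lemma crossesY a b : crosses p q (GY, (a, b)) =
  [&& 0 < q%:Z * (b + 1) - p%:Z * a, q%:Z * (b + 1) - p%:Z * a < p%:Z + q%:Z,
      0 <= a + b + 1 & a + b + 1 <= p%:Z + q%:Z].
Proof.
rewrite /crosses /par_u /par_s /cross /=.
have -> : 1 * p%:Z - -1 * q%:Z = p%:Z + q%:Z by ring.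
have -> : a * -1 - (b + 1) * 1 = - (a + b + 1) by ring.
have -> : q%:Z * -1 - p%:Z * 1 = - (p%:Z + q%:Z) by ring.
rewrite [_ / (- _)%:~R]fracN !opprK.
by rewrite !(frac_gt0, frac_lt1, frac_ge0, frac_le1) //; lia.
Qed.
Lemma par_sY a b : par_s p q (GY, (a, b)) = (a + b + 1)%:~R / (p%:Z + q%:Z)%:~R.
Proof.
rewrite /par_s /cross /=.
have -> : a * -1 - (b + 1) * 1 = - (a + b + 1) by ring.
have -> : q%:Z * -1 - p%:Z * 1 = - (p%:Z + q%:Z) by ring.
by rewrite fracN !opprK.
Qed.
End K.

Lemma mem_idx (n : nat) (i : int) : -1 <= i <= n%:Z ->
  i \in [seq (k%:Z - 1) | k <- iota 0 (n + 2)].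
Proof.
move=> hi; apply/mapP; exists (absz (i + 1)).
  rewrite mem_iota /=; lia.
lia.
Qed.

Lemma uniq_idx (n : nat) : uniq [seq (k%:Z - 1) | k <- iota 0 (n + 2)].
Proof.
rewrite map_inj_uniq ?iota_uniq // => x y /= h; lia.
Qed.

Lemma mem_cand p q k (i j : int) : -1 <= i <= q%:Z -> -1 <= j <= p%:Z ->
  (k, (i, j)) \in candidates p q.
Proof.
move=> hi hj; rewrite /candidates.
apply: (allpairs_f (fun k ij => (k, ij))); first by case: k.
by apply: (allpairs_f pair); apply: mem_idx.
Qed.

Lemma uniq_cand p q : uniq (candidates p q).
Proof.
rewrite /candidates.
apply: (allpairs_uniq (f := fun k ij => (k, ij))) => //.
  apply: (allpairs_uniq (f := pair)); rewrite ?uniq_idx //.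
  by move=> [x1 x2] [y1 y2] _ _ /=.
by move=> [x1 x2] [y1 y2] _ _ /=.
Qed.

Lemma frac_inj (x x' y : int) : y != 0 -> (x%:~R / y%:~R : rat) = x'%:~R / y%:~R -> x = x'.
Proof.
move=> hy h; have := congr1 (fun z => z * y%:~R) h.
by rewrite /= !divfK ?intr_eq0 // => /eqP; rewrite eqr_int => /eqP.
Qed.

Section L.
Variables p q : nat.
Hypotheses (hp : (0 < p)%N) (hq : (0 < q)%N) (hpq : coprime p q).

Local Notation L := (crossed_edges p q).

Lemma memL e : (e \in L) = (e \in candidates p q) && crosses p q e.
Proof. by rewrite mem_sort mem_filter andbC. Qed.

Lemma valZ e : e \in L -> e.1 = GZ ->
  exists2 a : nat, (0 < a < q)%N & par_s p q e = a%:R / q%:R.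
Proof.
case: e => [g [a b]] /= He Hg; subst g.
move: He; rewrite memL crossesZ // => /andP [_ /and4P [h1 h2 h3 h4]].
have a0 : a != 0.
  by apply/eqP => a0; subst a; case: (ltrP b 0) => hb; nia.
have aq : a != q.
  by apply/eqP => aq; subst a; case: (ltrP b p) => hb; nia.
exists (absz a); first by apply/andP; split; lia.
have -> : a = (absz a)%:Z by lia.
by rewrite par_sZ.
Qed.

Lemma valX e : e \in L -> e.1 = GX ->
  exists2 b : nat, (0 < b < p)%N & par_s p q e = b%:R / p%:R.
Proof.
case: e => [g [a b]] /= He Hg; subst g.
move: He; rewrite memL crossesX // => /andP [_ /and4P [h1 h2 h3 h4]].
have b0 : b != 0.
  by apply/eqP => b0; subst b; case: (ltrP a (0)) => hb; nia.
have bp : b != p.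
  by apply/eqP => bp; subst b; case: (ltrP a (q)) => hb; nia.
exists (absz b); first by apply/andP; split; lia.
have -> : b = (absz b)%:Z by lia.
by rewrite par_sX.
Qed.

Lemma valY e : e \in L -> e.1 = GY ->
  exists2 k : nat, (0 < k < p + q)%N & par_s p q e = k%:R / (p + q)%:R.
Proof.
case: e => [g [a b]] /= He Hg; subst g.
move: He; rewrite memL crossesY // => /andP [_ /and4P [h1 h2 h3 h4]].
have k0 : a + b + 1 != 0.
  apply/eqP => k0; have eb : b = - a - 1 by lia.
  by subst b; case: (ltrP a (0)) => ha; nia.
have kpq : a + b + 1 != p%:Z + q%:Z.
  apply/eqP => k1; have eb : b = p%:Z + q%:Z - a - 1 by lia.
  by subst b; case: (ltrP a (q)) => ha; nia.
exists (absz (a + b + 1)); first by apply/andP; split; lia.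
rewrite par_sY -PoszD.
have -> : a + b + 1 = (absz (a + b + 1))%:Z by lia.
by [].
Qed.

Lemma injL e e' : e \in L -> e' \in L -> e.1 = e'.1 -> par_s p q e = par_s p q e' -> e = e'.
Proof.
case: e => [g [a b]]; case: e' => [g' [a' b']] /= He He' Hg; subst g'.
move: He He'; rewrite !memL.
case: g => /andP [_ H] /andP [_ H'].
- rewrite !par_sX => /frac_inj Hb.
  have {Hb} Hb : b = b' by apply: Hb; lia.
  subst b'; move: H H'; rewrite !crossesX // => /and4P [h1 h2 h3 h4] /and4P [h1' h2' h3' h4'].
  have -> : a = a'; last by [].
  by case: (ltrP a a') => ha; [|case: (ltrP a' a) => hb]; nia.
- rewrite !par_sY => /frac_inj Hk.
  have {Hk} Hk : a + b + 1 = a' + b' + 1 by apply: Hk; lia.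
  move: H H'; rewrite !crossesY // => /and4P [h1 h2 h3 h4] /and4P [h1' h2' h3' h4'].
  have eb : b' = a + b - a' by lia.
  subst b'.
  have Ha : a = a'.
    by case: (ltrP a a') => ha; [|case: (ltrP a' a) => hb]; nia.
  subst a'; congr (_, (_, _)); lia.
- rewrite !par_sZ => /frac_inj Ha.
  have {Ha} Ha : a = a' by apply: Ha; lia.
  subst a'; move: H H'; rewrite !crossesZ // => /and4P [h1 h2 h3 h4] /and4P [h1' h2' h3' h4'].
  have -> : b = b'; last by [].
  by case: (ltrP b b') => ha; [|case: (ltrP b' b) => hb]; nia.
Qed.
End L.

Lemma ndvd m n x : coprime m n -> (0 < x < m)%N -> ~~ (m %| n * x)%N.
Proof.
move=> cmn /andP [x0 xm]; rewrite Gauss_dvdr //.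
by apply/negP => /(dvdn_leq x0); rewrite leqNgt xm.
Qed.

Section E.
Variables p q : nat.
Hypotheses (hp : (0 < p)%N) (hq : (0 < q)%N) (hpq : coprime p q).
Local Notation L := (crossed_edges p q).

Lemma existZ (a : nat) : (0 < a < q)%N ->
  exists2 e, e \in L & e.1 = GZ /\ par_s p q e = a%:R / q%:R.
Proof.
move=> ha.
have nd : ~~ (q %| p * a)%N by apply: ndvd => //; rewrite coprime_sym.
set c := (p * a %/ q)%N; set r := (p * a %% q)%N.
have E : (p * a = c * q + r)%N by apply: divn_eq.
have rq : (r < q)%N by apply: ltn_pmod.
have r0 : (0 < r)%N.
  rewrite lt0n; apply/negP => /eqP r0; move: nd; rewrite mulnC.
  by apply/negP/negPn; apply/dvdnP; exists c; lia.
exists (GZ, (a%:Z, c%:Z)); last by split; rewrite // par_sZ.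
rewrite memL; apply/andP; split.
  apply: mem_cand; apply/andP; split; nia.
rewrite crossesZ //; apply/and4P; split; nia.
Qed.

Lemma existX (b : nat) : (0 < b < p)%N ->
  exists2 e, e \in L & e.1 = GX /\ par_s p q e = b%:R / p%:R.
Proof.
move=> hb.
have nd : ~~ (p %| q * b)%N by apply: ndvd.
set c := (q * b %/ p)%N; set r := (q * b %% p)%N.
have E : (q * b = c * p + r)%N by apply: divn_eq.
have rp : (r < p)%N by apply: ltn_pmod.
have r0 : (0 < r)%N.
  rewrite lt0n; apply/negP => /eqP r0; move: nd.
  by apply/negP/negPn; apply/dvdnP; exists c; lia.
exists (GX, (c%:Z, b%:Z)); last by split; rewrite // par_sX.
rewrite memL; apply/andP; split.
  apply: mem_cand; apply/andP; split; nia.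
rewrite crossesX //; apply/and4P; split; nia.
Qed.

Lemma existY (k : nat) : (0 < k < p + q)%N ->
  exists2 e, e \in L & e.1 = GY /\ par_s p q e = k%:R / (p + q)%:R.
Proof.
move=> hk.
have cpq : coprime (p + q) q by rewrite /coprime gcdnC addnC gcdnDl gcdnC.
have nd : ~~ ((p + q) %| q * k)%N by apply: ndvd.
set c := (q * k %/ (p + q))%N; set r := (q * k %% (p + q))%N.
have E : (q * k = c * (p + q) + r)%N by apply: divn_eq.
have rp : (r < p + q)%N by apply: ltn_pmod; lia.
have r0 : (0 < r)%N.
  rewrite lt0n; apply/negP => /eqP r0; move: nd.
  by apply/negP/negPn; apply/dvdnP; exists c; lia.
have ck : (c < k)%N by nia.
have cq : (c < q)%N by nia.
have kc : (k <= p + c)%N.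
  rewrite leqNgt; apply/negP => h; nia.
exists (GY, (c%:Z, k%:Z - c%:Z - 1)); last first.
  split; rewrite // par_sY -PoszD.
  by have -> : c%:Z + (k%:Z - c%:Z - 1) + 1 = k%:Z by lia.
rewrite memL; apply/andP; split.
  apply: mem_cand; apply/andP; split; nia.
rewrite crossesY //; apply/and4P; split; nia.
Qed.
End E.

Lemma frac_lt (x y x' y' : nat) : (0 < y)%N -> (0 < y')%N ->
  (x%:R / y%:R < x'%:R / y'%:R :> rat) = (x * y' < x' * y)%N.
Proof.
move=> hy hy'.
by rewrite ltr_pdivrMr ?ltr0n // mulrAC ltr_pdivlMr ?ltr0n // -!natrM ltr_nat.
Qed.
Lemma frac_le (x y x' y' : nat) : (0 < y)%N -> (0 < y')%N ->
  (x%:R / y%:R <= x'%:R / y'%:R :> rat) = (x * y' <= x' * y)%N.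
Proof.
move=> hy hy'.
by rewrite ler_pdivrMr ?ltr0n // mulrAC ler_pdivlMr ?ltr0n // -!natrM ler_nat.
Qed.

Lemma single (T : eqType) (s : seq T) y : uniq s -> y \in s -> (forall e, e \in s -> e = y) ->
  s = [:: y].
Proof.
case: s => [//|z [|z' s]] U yin all.
  by rewrite (all z) // inE eqxx.
move: U; rewrite /= (all z) ?inE ?eqxx // (all z') ?inE ?eqxx ?orbT //.
Qed.

Lemma triple (T : eqType) (f : T -> rat) (s : seq T) y1 x y2 :
  sorted (fun a b => f a <= f b) s -> uniq s ->
  (forall e, e \in s -> [\/ e = y1, e = x | e = y2]) ->
  y1 \in s -> x \in s -> y2 \in s -> f y1 < f x -> f x < f y2 -> s = [:: y1; x; y2].
Proof.
move=> S U all i1 ix i2 l1 l2.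
have s3 : (size s <= 3)%N.
  apply: (uniq_leq_size (s2 := [:: y1; x; y2])) => // e /all [->|->|->]; rewrite !inE eqxx ?orbT //.
have n1x : y1 != x by apply/eqP => h; move: l1; rewrite h ltxx.
have nx2 : x != y2 by apply/eqP => h; move: l2; rewrite h ltxx.
have n12 : y1 != y2 by apply/eqP => h; move: (lt_trans l1 l2); rewrite h ltxx.
have s3' : (3 <= size s)%N.
  apply: (uniq_leq_size (s1 := [:: y1; x; y2])).
    by rewrite /= !inE negb_or n1x n12 nx2.
  by move=> e; rewrite !inE => /or3P [] /eqP ->.
case: s S U all i1 ix i2 s3 s3' => [|m0 [|m1 [|m2 [|? ?]]]] //= S U all _ _ _ _ _.
move: S U => /and3P [S1 S2 _] /and3P [U1 U2 _].
move: U1 U2; rewrite !inE.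
have h0 : m0 \in [:: m0; m1; m2] by rewrite inE eqxx.
have h1 : m1 \in [:: m0; m1; m2] by rewrite !inE eqxx ?orbT.
have h2 : m2 \in [:: m0; m1; m2] by rewrite !inE eqxx ?orbT.
move: S1 S2.
have [->|->|->] := all m0 h0;
have [->|->|->] := all m1 h1;
have [->|->|->] := all m2 h2;
rewrite ?eqxx ?orbT //= => S1 S2 _ _; exfalso; clear -S1 S2 l1 l2; lra.
Qed.



Section Abs.
Variables (T : eqType) (K : T -> gen) (f : T -> rat) (L : seq T) (g1 g2 : gen) (m n : nat).
Hypotheses (hn : (0 < n)%N) (hnm : (n < m)%N) (cmn : coprime m n).
Hypotheses (g12 : g1 <> g2) (g1Y : g1 <> GY) (g2Y : g2 <> GY).
Hypotheses (Hs : sorted (fun x y => f x <= f y) L) (Hu : uniq L).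
Hypothesis V1 : forall e, e \in L -> K e = g1 -> exists2 a : nat, (0 < a < m)%N & f e = a%:R / m%:R.
Hypothesis V2 : forall e, e \in L -> K e = g2 -> exists2 a : nat, (0 < a < n)%N & f e = a%:R / n%:R.
Hypothesis VY : forall e, e \in L -> K e = GY -> exists2 a : nat, (0 < a < m + n)%N & f e = a%:R / (m + n)%:R.
Hypothesis Kall : forall e, e \in L -> [\/ K e = g1, K e = g2 | K e = GY].
Hypothesis E1 : forall a : nat, (0 < a < m)%N -> exists2 e, e \in L & K e = g1 /\ f e = a%:R / m%:R.
Hypothesis E2 : forall a : nat, (0 < a < n)%N -> exists2 e, e \in L & K e = g2 /\ f e = a%:R / n%:R.
Hypothesis EY : forall a : nat, (0 < a < m + n)%N -> exists2 e, e \in L & K e = GY /\ f e = a%:R / (m + n)%:R.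
Hypothesis Inj : forall e e', e \in L -> e' \in L -> K e = K e' -> f e = f e' -> e = e'.

Lemma abs_main x0 i j : (i < j < size L)%N -> K (nth x0 L i) = g1 -> K (nth x0 L j) = g1 ->
  (forall k, (i < k < j)%N -> K (nth x0 L k) <> g1) ->
  map K (drop i.+1 (take j L)) = [:: GY] \/ map K (drop i.+1 (take j L)) = [:: GY; g2; GY].
Proof.
move=> /andP [ij jL] Ki Kj Kk.
have iL : (i < size L)%N by apply: ltn_trans jL.
have hm : (0 < m)%N by apply: leq_ltn_trans hnm.
set M := drop i.+1 (take j L).
have mono : forall k1 k2, (k1 <= k2)%N -> (k2 < size L)%N ->
    f (nth x0 L k1) <= f (nth x0 L k2).
  move=> k1 k2 h12 h2.
  have tr : transitive (fun x y => f x <= f y) by move=> ? ? ?; apply: le_trans.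
  have rf : reflexive (fun x y => f x <= f y) by move=> ?; apply: lexx.
  have H := sorted_leq_nth tr rf x0 Hs.
  by apply: H => //; rewrite inE //; apply: leq_ltn_trans h12 h2.
have posb : forall e, e \in L -> f (nth x0 L i) < f e -> f e < f (nth x0 L j) ->
    exists2 k, (i < k < j)%N & nth x0 L k = e.
  move=> e eL h1 h2; exists (index e L); last exact: nth_index.
  have kL : (index e L < size L)%N by rewrite index_mem.
  apply/andP; split; rewrite ltnNge; apply/negP => hk.
    have := mono _ _ hk iL; rewrite nth_index // => h.
    by have := lt_le_trans h1 h; rewrite ltxx.
  have := mono _ _ hk kL; rewrite nth_index // => h.
  by have := lt_le_trans h2 h; rewrite ltxx.
have sM : size M = (j - i.+1)%N by rewrite size_drop size_takel // ltnW.
have memM : forall e, e \in M <-> exists2 k, (i < k < j)%N & nth x0 L k = e.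
  move=> e; split.
  - move=> eM; have : (index e M < size M)%N by rewrite index_mem.
    rewrite sM => h.
    have hlt : (i.+1 + index e M < j)%N by lia.
    exists (i.+1 + index e M)%N; first by apply/andP; split; lia.
    by move: (nth_index x0 eM); rewrite /M nth_drop nth_take.
  - move=> [k /andP [ik kj] <-].
    have -> : nth x0 L k = nth x0 M (k - i.+1).
      by rewrite /M nth_drop nth_take; [congr nth; lia | lia].
    by apply: mem_nth; rewrite sM; lia.
have propM : forall e, e \in M ->
    [/\ e \in L, K e <> g1, f (nth x0 L i) <= f e & f e <= f (nth x0 L j)].
  move=> e /memM [k /andP [ik kj] <-]; split.
  - by apply: mem_nth; apply: ltn_trans jL.
  - by apply: Kk; rewrite ik kj.
  - by apply: mono; [apply: ltnW | apply: ltn_trans jL].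
  - by apply: mono; [apply: ltnW|].
have inM : forall e, e \in L -> f (nth x0 L i) < f e -> f e < f (nth x0 L j) -> e \in M.
  by move=> e eL h1 h2; apply/memM; apply: posb.
have [a ha fa] := V1 _ (mem_nth x0 iL) Ki.
have [a' ha' fa'] := V1 _ (mem_nth x0 jL) Kj.
have aa' : (a <= a')%N.
  by have := mono _ _ (ltnW ij) jL; rewrite fa fa' frac_le // => h; nia.
have aa'2 : a != a'.
  apply/eqP => eaa; subst a'.
  have := Inj _ _ (mem_nth x0 iL) (mem_nth x0 jL); rewrite Ki Kj fa fa' => /(_ erefl erefl) /eqP.
  by rewrite nth_uniq // => /eqP eij; move: ij; rewrite eij ltnn.
have ea' : a' = a.+1.
  apply/eqP; rewrite eqn_leq; apply/andP; split; last by lia.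
  rewrite leqNgt; apply/negP => h.
  have [e eL [Ke fe]] := E1 a.+1 ltac:(lia).
  have [k /andP [ik kj] ek] := posb e eL
     ltac:(by rewrite fa fe frac_lt //; nia) ltac:(by rewrite fa' fe frac_lt //; nia).
  by apply: (Kk k); [rewrite ik kj | rewrite ek].
subst a'.
set c := (a * n %/ m)%N; set r := (a * n %% m)%N.
have E : (a * n = c * m + r)%N by apply: divn_eq.
have rm : (r < m)%N by apply: ltn_pmod.
have r0 : (0 < r)%N.
  rewrite lt0n; apply/negP => /eqP r0.
  have := @ndvd m n a cmn ha; rewrite mulnC => /negP; apply; apply/dvdnP; exists c; lia.
have rnm : (r + n != m)%N.
  apply/eqP => rn; have := @ndvd m n a.+1 cmn ha'; rewrite mulnC => /negP; apply.
  apply/dvdnP; exists c.+1; nia.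
have cn : (c < n)%N by nia.
have classify : forall e, e \in M ->
   [\/ K e = g2 /\ f e = (c.+1)%:R / n%:R /\ (m < r + n)%N,
       K e = GY /\ f e = (a + c + 1)%:R / (m + n)%:R
     | K e = GY /\ f e = (a + c + 2)%:R / (m + n)%:R /\ (m < r + n)%N].
  move=> e /propM [eL Kg1 l1 l2].
  have [//|Ke|Ke] := Kall _ eL.
  - have [b hb fb] := V2 _ eL Ke.
    move: l1 l2; rewrite fa fb fa' !frac_le // => l1 l2.
    have cb : (c < b)%N by rewrite ltnNge; apply/negP => h; nia.
    have rn : (m < r + n)%N.
      rewrite ltnNge; apply/negP => h.
      have h' : (r + n < m)%N by lia.
      nia.
    have eb : b = c.+1 by apply/eqP; rewrite eqn_leq cb andbT leqNgt; apply/negP => h; nia.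
    by constructor 1; rewrite -eb.
  - have [k hk fk] := VY _ eL Ke.
    move: l1 l2; rewrite fa fk fa' !frac_le // ?addn_gt0 ?hm // => l1 l2.
    have ck : (a + c < k)%N by rewrite ltnNge; apply/negP => h; nia.
    have [h|h] : (r + n < m)%N \/ (m < r + n)%N by lia.
    + have ek : k = (a + c + 1)%N.
        apply/eqP; rewrite eqn_leq addn1 ck andbT leqNgt; apply/negP => h2; nia.
      by constructor 2; rewrite -ek.
    + have [ek|ek] : k = (a + c + 1)%N \/ k = (a + c + 2)%N.
        have : (k <= a + c + 2)%N by rewrite leqNgt; apply/negP => h2; nia.
        lia.
      * by constructor 2; rewrite -ek.
      * by constructor 3; rewrite -ek.
have hmn : (0 < m + n)%N by rewrite addn_gt0 hm.
have [y1 y1L [Ky1 fy1]] := EY (a + c + 1)%N ltac:(lia).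
have y1M : y1 \in M.
  by apply: inM => //; rewrite ?fa ?fa' fy1 frac_lt //; nia.
have uM : uniq M by rewrite /M drop_uniq // take_uniq.
have [h|h] : (r + n < m)%N \/ (m < r + n)%N by lia.
- left.
  rewrite (@single _ M y1) //= ?Ky1 //.
  move=> e eM; have [[_ [_ h']]|[Ke fe]|[_ [_ h']]] := classify e eM; try lia.
  by apply: Inj => //; [case: (propM e eM) | rewrite Ke Ky1 | rewrite fe fy1].
- right.
  have [x xL [Kx fx]] := E2 c.+1 ltac:(by apply/andP; split => //; nia).
  have [y2 y2L [Ky2 fy2]] := EY (a + c + 2)%N ltac:(lia).
  have xM : x \in M by apply: inM => //; rewrite ?fa ?fa' fx frac_lt //; nia.
  have y2M : y2 \in M by apply: inM => //; rewrite ?fa ?fa' fy2 frac_lt //; nia.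
  rewrite (@triple _ f M y1 x y2) //= ?Ky1 ?Kx ?Ky2 //.
  + by rewrite /M; apply: drop_sorted; apply: take_sorted.
  + move=> e eM; have eL : e \in L by case: (propM e eM).
    have [[Ke [fe _]]|[Ke fe]|[Ke [fe _]]] := classify e eM.
    * by constructor 2; apply: Inj => //; rewrite ?Ke ?Kx ?fe ?fx.
    * by constructor 1; apply: Inj => //; rewrite ?Ke ?Ky1 ?fe ?fy1.
    * by constructor 3; apply: Inj => //; rewrite ?Ke ?Ky2 ?fe ?fy2.
  + by rewrite fy1 fx frac_lt //; nia.
  + by rewrite fy2 fx frac_lt //; nia.
Qed.
End Abs.


Lemma is_genE p q g e : is_gen g (letter_of p q e) -> e.1 = g.
Proof. by case: g; case: e => [[] ?]. Qed.
Lemma is_gen_of p q e : is_gen e.1 (letter_of p q e).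
Proof. by case: e => [[] ?]. Qed.

Lemma reduce p q g1 g2 :
  (forall x0 i j, (i < j < size (crossed_edges p q))%N ->
     (nth x0 (crossed_edges p q) i).1 = g1 -> (nth x0 (crossed_edges p q) j).1 = g1 ->
     (forall k, (i < k < j)%N -> (nth x0 (crossed_edges p q) k).1 <> g1) ->
     map fst (drop i.+1 (take j (crossed_edges p q))) = [:: GY] \/
     map fst (drop i.+1 (take j (crossed_edges p q))) = [:: GY; g2; GY]) ->
  between_prop g1 GY g2 (omega p q).
Proof.
move=> H i j; rewrite /omega size_map => hij Hi Hj Hk /=.
set x0 : edge := (GX, (0, 0)).
have jL : (j < size (crossed_edges p q))%N by case/andP: hij.
have iL : (i < size (crossed_edges p q))%N by case/andP: hij => h1 h2; apply: ltn_trans h2.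
rewrite -map_take -map_drop -map_comp.
rewrite (eq_map (f := fst \o letter_of p q) (g := fst)) //.
apply: (H x0) => //.
- by move: Hi; rewrite (nth_map x0) // => /is_genE.
- by move: Hj; rewrite (nth_map x0) // => /is_genE.
- move=> k /andP [ik kj] ek.
  have kL : (k < size (crossed_edges p q))%N by apply: ltn_trans jL.
  have := Hk k; rewrite ik kj (nth_map x0) // -ek is_gen_of.
  by move=> /(_ isT).
Qed.

Theorem lemma4p6 (p q : nat) :
  (0 < p)%N -> (0 < q)%N -> coprime p q ->
  ((p < q)%N -> between_prop GZ GY GX (omega p q)) /\
  ((q < p)%N -> between_prop GX GY GZ (omega p q)).
Proof.
move=> hp hq hpq.
have Hs : sorted (fun x y => par_s p q x <= par_s p q y) (crossed_edges p q).
  by apply: sort_sorted => x y; apply: le_total.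
have Hu : uniq (crossed_edges p q) by rewrite sort_uniq filter_uniq // uniq_cand.
have Inj := @injL p q hp hq hpq.
split => hlt; apply: reduce => x0 i j.
- apply: (@abs_main edge fst (par_s p q) (crossed_edges p q) GZ GX q p hp hlt _ Hs Hu
     _ _ _ _ _ _ _ Inj).
  + by rewrite coprime_sym.
  + by move=> e eL Ke; apply: (@valZ p q hp hq hpq).
  + by move=> e eL Ke; apply: (@valX p q hp hq hpq).
  + by move=> e eL Ke; rewrite addnC; apply: (@valY p q hp hq hpq).
  + by move=> e _; case: e.1; [constructor 2 | constructor 3 | constructor 1].
  + by move=> a ha; apply: (@existZ p q hp hq hpq).
  + by move=> a ha; apply: (@existX p q hp hq hpq).
  + by move=> a ha; rewrite addnC; apply: (@existY p q hp hq hpq); rewrite addnC.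
- apply: (@abs_main edge fst (par_s p q) (crossed_edges p q) GX GZ p q hq hlt hpq Hs Hu
     _ _ _ _ _ _ _ Inj).
  + by move=> e eL Ke; apply: (@valX p q hp hq hpq).
  + by move=> e eL Ke; apply: (@valZ p q hp hq hpq).
  + by move=> e eL Ke; apply: (@valY p q hp hq hpq).
  + by move=> e _; case: e.1; [constructor 1 | constructor 3 | constructor 2].
  + by move=> a ha; apply: (@existX p q hp hq hpq).
  + by move=> a ha; apply: (@existZ p q hp hq hpq).
  + by move=> a ha; apply: (@existY p q hp hq hpq).
Qed.
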